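(* Let $M$ be a module over a ring, and let $(\Delta_{\mathcal{I}})_{\mathcal{I}\subseteq\mathcal{P}(M)}$ be the distributed spaces of the spatial constraint system $(\mathcal{P}(M),\subseteq,(\delta_S)_{S\subseteq M})$ (whose agents are the subsets $S\subseteq M$). Then $\Delta_{\{A,B\}}=\delta_{A\cap B}$ for every $A,B\subseteq M$.
   Context: $\delta_S(X)=X\oplus S=\{x+s : x\in X, s\in S\}$ is the dilation by $S$; each $\delta_S$ is a space function on the complete lattice $(\mathcal{P}(M),\subseteq)$, i.e. preserves directed unions, binary unions and $\emptyset$. For a family of space functions $(s_i)_{i\in G}$ on a complete lattice, the distributed space of a group $I\subseteq G$ is $\Delta_I=\max\{f \text{ space function} : f(X)\subseteq s_i(X)\text{ for all } X \text{ and all } i\in I\}$ (this greatest element exists). Here $G=\mathcal{P}(M)$ and $s_S=\delta_S$. *)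

(* Defs.v *)
From mathcomp Require Import all_boot all_order all_algebra.
From mathcomp Require Import boolp classical_sets.
Set Implicit Arguments. Unset Strict Implicit. Unset Printing Implicit Defensive.
Import GRing.Theory.
Local Open Scope classical_set_scope.
Local Open Scope ring_scope.

Definition dilation (M : zmodType) (S : set M) : set M -> set M :=
  fun X => [set z | exists x, exists s, X x /\ S s /\ z = x + s].

Definition directed_family (T : Type) (D : set (set T)) : Prop :=
  (exists X, D X) /\
  forall X Y, D X -> D Y -> exists2 Z, D Z & (X `<=` Z /\ Y `<=` Z).

Definition space_function (T : Type) (f : set T -> set T) : Prop :=
  [/\ (forall D : set (set T), directed_family D ->
         f [set x | exists2 X, D X & X x] = [set y | exists2 X, D X & f X y]),
      (forall X Y, f (X `|` Y) = f X `|` f Y)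
    & f set0 = set0].

Definition below_all (G T : Type) (s : G -> set T -> set T) (I : set G)
  (f : set T -> set T) : Prop :=
  space_function f /\ forall i, I i -> forall X, f X `<=` s i X.

Definition is_greatest_below (G T : Type) (s : G -> set T -> set T) (I : set G)
  (f : set T -> set T) : Prop :=
  below_all s I f /\ forall g, below_all s I g -> forall X, g X `<=` f X.

(* Distributed space Delta_I := max { f space function | f <= s_i, i in I }
   (chosen by Hilbert's epsilon; the paper asserts this maximum exists). *)
Definition distributed_space (G T : Type) (s : G -> set T -> set T) (I : set G)
  : set T -> set T :=
  xget (fun _ => set0) (is_greatest_below s I).

(* Main.v *)
Require Import Defs.
From mathcomp Require Import all_boot all_order all_algebra.
From mathcomp Require Import boolp classical_sets.
Local Open Scope classical_set_scope.
Local Open Scope ring_scope.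
Import GRing.Theory.
Set Implicit Arguments. Unset Strict Implicit.

Lemma dil_space (M : zmodType) (C : set M) : space_function (dilation C).
Proof.
split.
- move=> D _; apply/seteqP; split => z /=.
  + by move=> [x [s [[X DX Xx] [Cs ->]]]]; exists X => //; exists x, s.
  + by move=> [X DX [x [s [Xx [Cs ->]]]]]; exists x, s; split => //; exists X.
- move=> X Y; apply/seteqP; split => z /=.
  + by move=> [x [s [[Xx|Yx] [Cs ->]]]]; [left|right]; exists x, s.
  + by move=> [[x [s [Xx [Cs ->]]]]|[x [s [Yx [Cs ->]]]]]; exists x, s;
      split => //; [left|right].
- by apply/seteqP; split => z //= [x [s [[]]]].
Qed.

Definition sset (M : zmodType) (s : seq M) : set M := [set x | x \in s].

Lemma key (M : zmodType) (A B : set M) f :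
  below_all (@dilation M) [set S | S = A \/ S = B] f ->
  forall X, f X `<=` dilation (A `&` B) X.
Proof.
move=> [[Hdir Hun H0] Hle] X y Hy.
pose D := [set F | exists s : seq M, F = sset s /\ F `<=` X].
have dirD : directed_family D.
  split; first by exists (sset [::]); exists [::]; split => // x.
  move=> F G [s [-> Fs]] [t [-> Gt]]; exists (sset (s ++ t)).
    exists (s ++ t); split => // x; rewrite /sset /= mem_cat => /orP[]; auto.
  by split => x; rewrite /sset /= mem_cat => ->; rewrite ?orbT.
have UD : [set x | exists2 F, D F & F x] = X.
  apply/seteqP; split => x /=.
    by move=> [F [s [-> Fs]] Fx]; apply: Fs.
  move=> Xx; exists (sset [:: x]); last by rewrite /sset /= mem_seq1.
  by exists [:: x]; split => // z; rewrite /sset /= mem_seq1 => /eqP ->.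
move: Hy; rewrite -UD (Hdir D dirD) => -[F [s [-> Fs]] Hy].
have : exists2 a, a \in s & f [set a] y.
  elim: s Fs Hy => [|a s IH] Fs Hy.
    have E0 : @sset M [::] = set0 by apply/seteqP; split => x.
    by move: Hy; rewrite E0 H0.
  have E : sset (a :: s) = [set a] `|` sset s.
    apply/seteqP; split => x; rewrite /sset /= in_cons.
      by case/orP => [/eqP ->|H]; [left|right].
    by case => [->|H]; rewrite ?eqxx ?H ?orbT.
  move: Hy; rewrite E Hun => -[Ha|Hs].
    by exists a => //; rewrite in_cons eqxx.
  have Fs' : sset s `<=` X by move=> x xs; apply: Fs; rewrite /sset /= in_cons xs orbT.
  by have [b bs Hb] := IH Fs' Hs; exists b => //; rewrite in_cons bs orbT.
move=> [a aS Ha].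
have [x1 [s1 [x1a [As1 e1]]]] := Hle A (or_introl erefl) _ _ Ha.
have [x2 [s2 [x2a [Bs2 e2]]]] := Hle B (or_intror erefl) _ _ Ha.
move: x1a x2a; rewrite /set1 /= => ex1 ex2; subst x1 x2.
exists a, s1; split; first by exists (sset s) => //; exists s.
split => //; split => //.
have es : s1 = s2 by apply: (addrI a); rewrite -e1 -e2.
by rewrite es.
Qed.

Theorem mainTheorem15 (R : pzRingType) (M : lmodType R) (A B : set M) :
  distributed_space (@dilation M) [set S | S = A \/ S = B]
  = dilation (A `&` B).
Proof.
have G : is_greatest_below (@dilation M) [set S | S = A \/ S = B]
           (dilation (A `&` B)).
  split; last by move=> g Hg X; apply: key.
  split; first exact: dil_space.
  move=> i [->|->] X z [x [s [Xx [[As Bs] ->]]]]; by exists x, s.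
have := xgetI (fun _ => set0) G; rewrite -/(distributed_space _ _).
move=> [Hf Hgf]; case: G => HG HgG.
apply: funext => X; apply/seteqP; split.
  exact: HgG.
exact: Hgf.
Qed.
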